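(* Let $s$ be a positive integer and let $h_{s,i,j}$ be as in the context. Then for $0\le i\le s$, $$\sum_{j'=i+1}^{s}h_{s,i,j'}=(-1)^i\binom{s-1}{i}\Big[\frac1s\binom{2s}{s-1}-1\Big],$$ and for $s<i\le 2s$, $$\sum_{j'=0}^{i-s-1}h_{s,2s-i,s-j'}=(-1)^i\binom{s-1}{2s-i}\Big[\frac1s\binom{2s}{s-1}-1\Big].$$
   Context: For a fixed positive integer $s$, the numbers $h_{s,i,j}$ (integers $i\ge 0$, $j$) are defined recursively by: $h_{s,i,j}=0$ if $j\le i$; for $i=0$ and $j\ge 1$, $h_{s,0,j}=\binom{s+j-1}{j}\frac{s-j}{s}$; for $i>0$ and $j>i$, $h_{s,i,j}=-\frac{s-j+1}{i}h_{s,i-1,j-1}-\frac{j-i}{i}h_{s,i-1,j}$. Binomial coefficients $\binom{a}{b}$ with $0\le a<b$ are $0$. *)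

(* Defs.v *)
From mathcomp Require Import all_boot all_algebra.
Set Implicit Arguments. Unset Strict Implicit. Unset Printing Implicit Defensive.
Import GRing.Theory Num.Theory.
Local Open Scope ring_scope.

(* h s i j = h_{s,i,j} as a rational number; i, j are naturals
   (for j <= i, including all negative j, the value is 0, and the
   recursion never needs negative j). *)
Fixpoint h (s i j : nat) : rat :=
  match i with
  | 0 => if (j <= 0)%N then 0
         else ('C(s + j - 1, j))%:R * ((s%:R - j%:R) / s%:R)
  | i'.+1 =>
      if (j <= i)%N then 0
      else - ((s%:R - j%:R + 1) / i%:R) * h s i' (j - 1)
           - ((j%:R - i%:R) / i%:R) * h s i' j
  end.

(* Main.v *)
Require Import Defs.
From mathcomp Require Import all_boot all_algebra.
From mathcomp Require Import zify ring lra.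
Import GRing.Theory Num.Theory.
Local Open Scope ring_scope.

Lemma h0 s i j : (j <= i)%N -> h s i j = 0.
Proof. by case: i => [|i] /= ->. Qed.

Lemma hrec s i j : h s i.+1 j =
  - ((s%:R - j%:R + 1) / i.+1%:R) * h s i (j - 1)
  - ((j%:R - i.+1%:R) / i.+1%:R) * h s i j.
Proof.
rewrite /=; case: ifP => // hj.
rewrite (@h0 s i (j - 1)); last lia.
case: (ltnP i j) => hij.
  have -> : j = i.+1 by lia.
  by rewrite subrr !mul0r mulr0 subr0.
by rewrite (@h0 s i j) // !mulr0 subr0.
Qed.

Definition T s i := \sum_(j < s.+1) h s i j.

Lemma Trec s i : T s i.+1 = - ((s%:R - i.+1%:R) / i.+1%:R) * T s i.
Proof.
rewrite /T.
under eq_bigr => j _ do rewrite hrec.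
rewrite big_split /= big_ord_recl /= sub0n (@h0 s i 0) // mulr0 add0r.
have E1 : \sum_(i0 < s)
     - ((s%:R - (bump 0 i0)%:R + 1) / i.+1%:R) * h s i (bump 0 i0 - 1) =
     \sum_(k < s.+1) - ((s%:R - k%:R) / i.+1%:R) * h s i k.
  rewrite big_ord_recr /= subrr mul0r oppr0 mul0r addr0.
  apply: eq_bigr => k _; rewrite /bump add1n subn1 /= -addn1 natrD.
  congr (- (_ / _) * _); ring.
rewrite E1 -big_split /= mulr_sumr; apply: eq_bigr => k _.
rewrite mulNr -mulrN; ring.
Qed.

Lemma Tform s i (hs : (0 < s)%N) : T s i = (-1)^+i * ('C(s-1,i))%:R * T s 0.
Proof.
elim: i => [|i IH]; first by rewrite expr0 bin0 !mul1r.
have nz : (i.+1%:R : rat) != 0 by rewrite pnatr_eq0.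
have key : (i.+1%:R : rat) * ('C(s-1,i.+1))%:R = (s%:R - i.+1%:R) * ('C(s-1,i))%:R.
  case: (ltnP i s) => his.
    rewrite -natrM mul_bin_left -natrB // natrM; congr (_%:R * _); lia.
  by rewrite !bin_small ?mulr0 //; lia.
rewrite Trec IH -[('C(s-1,i.+1))%:R](mulKf nz) key exprS; ring.
Qed.

Lemma G s m : \sum_(k < m.+1) (('C(s+k,k.+1))%:R - ('C(s+k,k))%:R : rat)
   = ('C(s+m.+1, m.+1))%:R - 1 - ('C(s+m.+1,m))%:R.
Proof.
elim: m => [|m IH].
  by rewrite big_ord_recr big_ord0 /= addn0 addn1 !bin1 !bin0 add0r -addn1 natrD; ring.
rewrite big_ord_recr /= IH (addnS s m.+1) !binS !natrD; ring.
Qed.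

Lemma T0 n : T n.+1 0 = ('C(2 * n.+1, n))%:R / n.+1%:R - 1.
Proof.
have nz : (n.+1%:R : rat) != 0 by rewrite pnatr_eq0.
rewrite /T big_ord_recl /= add0r.
transitivity (\sum_(k < n.+1) (('C(n.+1+k,k.+1))%:R - ('C(n.+1+k,k))%:R : rat)).
  apply: eq_bigr => k _; rewrite /bump add1n addnS subn1 /=.
  move: (nat_of_ord k) => {}k.
  have := mul_bin_left (n.+1 + k) k; rewrite addnK => E.
  have E' : (n.+1%:R : rat) * ('C(n.+1+k,k))%:R = k.+1%:R * ('C(n.+1+k,k.+1))%:R.
    by rewrite -!natrM E.
  rewrite (_ : ('C(n.+1+k,k))%:R = k.+1%:R * ('C(n.+1+k,k.+1))%:R / n.+1%:R :> rat).
    by rewrite mulrBl mulrBr divff // mulr1; congr (_ - _); ring.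
  by apply: (mulfI nz); rewrite E' mulrCA divff // mulr1.
rewrite G.
have := mul_bin_left (2 * n.+1) n => E.
have H2 : (2 * n.+1 - n = n.+2)%N by lia.
rewrite H2 in E.
rewrite mul2n -addnn in E *.
rewrite (_ : ('C(n.+1+n.+1,n.+1))%:R = n.+2%:R * ('C(n.+1+n.+1,n))%:R / n.+1%:R :> rat).
  rewrite -[n.+2%:R]natr1 mulrDl mulrDl mul1r mulrAC divff // mul1r; ring.
by apply: (mulfI nz); rewrite -[X in X = _]natrM E natrM mulrCA divff // mulr1.
Qed.

Lemma part1 s i : (0 < s)%N -> (i <= s)%N ->
  \sum_(i.+1 <= j < s.+1) h s i j = T s i.
Proof.
move=> hs his; rewrite /T -(big_mkord xpredT) [RHS](big_cat_nat _ (n:=i.+1)) /=; [|lia|lia].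
have -> : \sum_(0 <= j < i.+1) h s i j = 0.
  rewrite big_nat_cond big1 // => j /andP[/andP[_ hj] _].
  by apply: h0; lia.
by rewrite add0r.
Qed.

Theorem proposition11 (s : nat) (hs : (0 < s)%N) :
  (forall i : nat, (i <= s)%N ->
     \sum_(i.+1 <= j < s.+1) h s i j
     = (-1) ^+ i * ('C(s - 1, i))%:R
       * (('C(2 * s, s - 1))%:R / s%:R - 1 : rat)) /\
  (forall i : nat, (s < i)%N -> (i <= 2 * s)%N ->
     \sum_(0 <= j' < i - s) h s (2 * s - i) (s - j')
     = (-1) ^+ i * ('C(s - 1, 2 * s - i))%:R
       * (('C(2 * s, s - 1))%:R / s%:R - 1 : rat)).
Proof.
have Hall : forall i, (i <= s)%N -> \sum_(i.+1 <= j < s.+1) h s i j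
     = (-1) ^+ i * ('C(s - 1, i))%:R
       * (('C(2 * s, s - 1))%:R / s%:R - 1 : rat).
  move=> i his; rewrite part1 // Tform //.
  by case: s hs his => // n _ _; rewrite T0 subn1.
split => // i hi1 hi2.
set k := (2 * s - i)%N.
have -> : ((-1) ^+ i = (-1) ^+ k :> rat).
  have -> : i = (k + (i - s) * 2)%N by rewrite /k; lia.
  by rewrite exprD exprM sqrr_sign mulr1.
rewrite -Hall; last by rewrite /k; lia.
rewrite big_nat_rev /=.
have -> : (s.+1 = (s - k) + k.+1)%N by rewrite /k; lia.
rewrite -{1}[k.+1]add0n big_addn addnK.
have -> : (i - s = s - k)%N by rewrite /k; lia.
apply: eq_big_nat => j /andP[_ hj]; congr (h _ _ _); rewrite /k in hj *; lia.
Qed.
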